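(* Fix a monomial order on $S$. Let $J,E$ be ideals of $S$ and let $\mathcal G_J$ be a Gröbner basis of $J$. If $E$ is S-nice with respect to $\mathcal G_J$, then $(J,E)$ is a G-nice pair; more precisely, for every Gröbner basis $\mathcal G_E$ of $E$, $\mathcal G_E\cup\mathcal G_J$ is a Gröbner basis of $J+E$.
   Context: $K$ is a field and $S=K[x_1,\ldots,x_n]$ with a fixed monomial order. For $0\neq f\in S$, $\mathrm{in}(f)$ denotes its leading monomial and $\mathrm{LT}(f)$ its leading term; for an ideal $I$, $\mathrm{in}(I)$ is the ideal generated by the leading monomials of the nonzero elements of $I$. A pair $(J,E)$ of ideals is G-nice if $\mathrm{in}(J+E)=\mathrm{in}(J)+\mathrm{in}(E)$. For nonzero $f,g\in S$ the S-polynomial is $S(f,g)=\frac{\mathrm{lcm}(\mathrm{in}(f),\mathrm{in}(g))}{\mathrm{LT}(f)}f-\frac{\mathrm{lcm}(\mathrm{in}(f),\mathrm{in}(g))}{\mathrm{LT}(g)}g$. Given a Gröbner basis $\mathcal G_J$ of an ideal $J$, an ideal $E$ is called S-nice with respect to $\mathcal G_J$ if $S(f,g)\in E$ for all $f\in\mathcal G_J$ and all nonzero $g\in E$. *)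

(* Defs.v *)
From HB Require Import structures.
From mathcomp Require Import all_boot all_order all_algebra.
From mathcomp Require Import mpoly.
Set Implicit Arguments. Unset Strict Implicit. Unset Printing Implicit Defensive.
Import GRing.Theory.
Local Open Scope ring_scope.

Section Groebner.
Variables (n : nat) (K : fieldType).
Local Notation S := {mpoly K[n]}.
Local Notation mon := 'X_{1..n}.

(* A monomial order on the monomials of K[x_1..x_n], given as a relation
   "mo m1 m2" meaning m1 <= m2: a total order, compatible with
   multiplication, with 1 (= mnm0) as least element (hence a well-order,
   by Dickson's lemma). *)
Definition monomial_order (mo : rel mon) : Prop :=
  [/\ reflexive mo, antisymmetric mo, transitive mo & total mo] /\
  (forall m1 m2 m, mo m1 m2 -> mo (mnm_add m1 m) (mnm_add m2 m)) /\
  (forall m, mo mnm0 m).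

(* Leading monomial in(f): the mo-largest monomial of the support of f
   (meaningful for f != 0). *)
Definition lm (mo : rel mon) (f : S) : mon :=
  foldr (fun m acc => if mo acc m then m else acc) mnm0 (msupp f).

Definition lc (mo : rel mon) (f : S) : K := f@_(lm mo f).
Definition LT (mo : rel mon) (f : S) : S := lc mo f *: 'X_[lm mo f].

Definition spoly (mo : rel mon) (f g : S) : S :=
  let L := mlcm (lm mo f) (lm mo g) in
  (lc mo f)^-1 *: ('X_[mnm_sub L (lm mo f)] * f)
  - (lc mo g)^-1 *: ('X_[mnm_sub L (lm mo g)] * g).

Definition is_ideal (I : S -> Prop) : Prop :=
  [/\ I 0, (forall a b, I a -> I b -> I (a + b))
    & (forall r a, I a -> I (r * a))].

Definition gen_ideal (A : S -> Prop) (f : S) : Prop :=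
  exists s : seq (S * S), (forall p, p \in s -> A p.2) /\
                          f = \sum_(p <- s) p.1 * p.2.

Definition ideal_sum (I J : S -> Prop) (f : S) : Prop :=
  exists a b, [/\ I a, J b & f = a + b].

Definition ideal_eq (I J : S -> Prop) : Prop := forall f, I f <-> J f.

Definition init_ideal (mo : rel mon) (I : S -> Prop) : S -> Prop :=
  gen_ideal (fun h => exists f, [/\ I f, f != 0 & h = 'X_[lm mo f]]).

Definition groebner_basis (mo : rel mon) (I : S -> Prop) (G : seq S) : Prop :=
  (forall g, g \in G -> I g /\ g != 0) /\
  ideal_eq (init_ideal mo I)
           (gen_ideal (fun h => exists2 g, g \in G & h = 'X_[lm mo g])).

Definition G_nice (mo : rel mon) (J E : S -> Prop) : Prop :=
  ideal_eq (init_ideal mo (ideal_sum J E))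
           (ideal_sum (init_ideal mo J) (init_ideal mo E)).

Definition S_nice (mo : rel mon) (GJ : seq S) (E : S -> Prop) : Prop :=
  forall f g, f \in GJ -> E g -> g != 0 -> E (spoly mo f g).

End Groebner.

(* Main.v *)
Require Import Defs.
From HB Require Import structures.
From mathcomp Require Import all_boot all_order all_algebra.
From mathcomp Require Import mpoly.
From Stdlib Require Import Classical ClassicalEpsilon.
Set Implicit Arguments. Unset Strict Implicit. Unset Printing Implicit Defensive.

Lemma min_from (g : nat -> nat) (i : nat) :
  exists j, i <= j /\ forall j', i <= j' -> g j <= g j'.
Proof.
suff H : forall v j, i <= j -> g j <= v -> exists j0, i <= j0 /\ forall j', i <= j' -> g j0 <= g j'.
  by apply: (H (g i) i).
elim=> [|v IH] j hij hg.
  by exists j; split=> // j' _; rewrite (leq_trans hg).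
destruct (classic (exists j', i <= j' /\ g j' < g j)) as [[j' [h1 h2]]|hn].
  by apply: (IH j') => //; rewrite -ltnS (leq_trans h2).
exists j; split=> // j' hj'; rewrite leqNgt; apply/negP=> hlt; apply: hn; by exists j'.
Qed.

Lemma chain_rel (R : nat -> nat -> Prop) (h : nat -> nat) :
  (forall x y z, R x y -> R y z -> R x z) ->
  (forall k, R (h k) (h k.+1)) -> forall a b, a < b -> R (h a) (h b).
Proof.
move=> Rt Hs a; elim=> // b IH; rewrite ltnS leq_eqVlt => /orP [/eqP ->|hab] //.
exact: Rt (IH hab) (Hs b).
Qed.

Lemma sub_nat (g : nat -> nat) : exists phi : nat -> nat,
  forall a b, a < b -> phi a < phi b /\ g (phi a) <= g (phi b).
Proof.
pose mf i := proj1_sig (constructive_indefinite_description _ (min_from g i)).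
have mfP i : i <= mf i /\ forall j', i <= j' -> g (mf i) <= g j'.
  exact: (proj2_sig (constructive_indefinite_description _ (min_from g i))).
pose phi := fix phi k := if k is k'.+1 then mf (phi k').+1 else mf 0.
have step k : phi k < phi k.+1 /\ g (phi k) <= g (phi k.+1).
  have h1 : phi k < phi k.+1 by rewrite /= ; exact: (proj1 (mfP _)).
  split=> //; case: k h1 => [|k] h1 /=.
    by apply: (proj2 (mfP 0)).
  apply: (proj2 (mfP _)); apply: leq_trans h1; rewrite /=.
  exact: ltnW (leq_trans _ (proj1 (mfP _))).
exists phi; apply: (chain_rel (R := fun x y => x < y /\ g x <= g y)) => //.
by move=> x y z [h1 h2] [h3 h4]; split; [exact: ltn_trans h3|exact: leq_trans h4].
Qed.
From HB Require Import structures.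
From mathcomp Require Import all_boot all_order all_algebra.
From mathcomp Require Import mpoly.
From Stdlib Require Import Classical ClassicalEpsilon.
Set Implicit Arguments. Unset Strict Implicit. Unset Printing Implicit Defensive.

Lemma dickson_seq n (f : nat -> 'X_{1..n}) (s : seq 'I_n) : exists phi : nat -> nat,
  forall a b, a < b -> phi a < phi b /\ forall j, j \in s -> f (phi a) j <= f (phi b) j.
Proof.
elim: s => [|i s [phi Hphi]].
  by exists id => a b hab; split.
have [psi Hpsi] := sub_nat (fun k => f (phi k) i).
exists (fun k => phi (psi k)) => a b hab.
have [h1 h2] := Hpsi a b hab.
have [h3 h4] := Hphi _ _ h1.
split=> // j; rewrite inE => /orP [/eqP ->|hj] //.
exact: h4.
Qed.

Lemma dickson n (f : nat -> 'X_{1..n}) : exists a b, a < b /\ (f a <= f b)%MM.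
Proof.
have [phi Hphi] := dickson_seq f (enum 'I_n).
have [h1 h2] := Hphi 0 1 isT.
exists (phi 0), (phi 1); split=> //; apply/mnm_lepP=> j; apply: h2.
by rewrite mem_enum.
Qed.

Lemma mo_div n (mo : rel 'X_{1..n}) : monomial_order mo ->
  forall m1 m2, (m1 <= m2)%MM -> mo m1 m2.
Proof.
move=> [_ [hM h0]] m1 m2 hle.
have := hM _ _ m1 (h0 (m2 - m1)%MM).
by rewrite add0m submK.
Qed.

Definition mlt n (mo : rel 'X_{1..n}) (x y : 'X_{1..n}) := mo x y && (x != y).

Lemma mlt_trans n (mo : rel 'X_{1..n}) : monomial_order mo ->
  forall x y z, mlt mo x y -> mlt mo y z -> mlt mo x z.
Proof.
move=> [[hr ha ht _] _] x y z /andP [h1 h2] /andP [h3 h4].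
rewrite /mlt (ht _ _ _ h1 h3) /=; apply/negP=> /eqP exz; subst z.
by move/negP: h2; apply; apply/eqP; apply: ha; rewrite h1 h3.
Qed.

Lemma mlt_wf n (mo : rel 'X_{1..n}) : monomial_order mo -> well_founded (mlt mo).
Proof.
move=> Hmo x; apply: NNPP => hx.
have step : forall y : {y | ~ Acc (mlt mo) y}, {z | ~ Acc (mlt mo) z /\ mlt mo z (proj1_sig y)}.
  move=> [y hy]; apply: constructive_indefinite_description => /=.
  apply: NNPP => hn; apply: hy; constructor => z hz.
  by apply: NNPP => hz'; apply: hn; exists z.
pose nxt y := exist (fun z => ~ Acc (mlt mo) z) (proj1_sig (step y)) (proj1 (proj2_sig (step y))).
pose sq := fix sq k := if k is k'.+1 then nxt (sq k') else exist _ x hx.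
pose f k := proj1_sig (sq k).
have fs k : mlt mo (f k.+1) (f k) by exact: (proj2 (proj2_sig (step (sq k)))).
have fch : forall a b, a < b -> mlt mo (f b) (f a).
  apply: (chain_rel (R := fun a b => mlt mo (f b) (f a))) => //.
  by move=> p q r h1 h2; apply: mlt_trans h2 h1.
have [a [b [hab hdiv]]] := dickson f.
have := fch _ _ hab; case/andP => h1 /negP; apply; apply/eqP.
have [[_ ha _ _] _] := Hmo; apply: ha; rewrite h1 /=.
exact: mo_div.
Qed.
From HB Require Import structures.
From mathcomp Require Import all_boot all_order all_algebra.
From mathcomp Require Import mpoly.
From Stdlib Require Import Classical ClassicalEpsilon.
Set Implicit Arguments. Unset Strict Implicit. Unset Printing Implicit Defensive.
Import GRing.Theory.
Local Open Scope ring_scope.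

Section LM.
Variables (n : nat) (K : fieldType) (mo : rel 'X_{1..n}).
Hypothesis Hmo : monomial_order mo.
Local Notation S := {mpoly K[n]}.

Lemma mo_refl m : mo m m. Proof. by case: Hmo => [[h _ _ _] _]. Qed.
Lemma mo_anti m1 m2 : mo m1 m2 -> mo m2 m1 -> m1 = m2.
Proof. by case: Hmo => [[_ h _ _] _] h1 h2; apply: h; rewrite h1 h2. Qed.
Lemma mo_trans m1 m2 m3 : mo m1 m2 -> mo m2 m3 -> mo m1 m3.
Proof. by case: Hmo => [[_ _ h _] _] h1 h2; apply: h h2. Qed.
Lemma mo_total m1 m2 : mo m1 m2 || mo m2 m1.
Proof. by case: Hmo => [[_ _ _ h] _]. Qed.
Lemma mo_addr m1 m2 m : mo m1 m2 -> mo (m1 + m)%MM (m2 + m)%MM.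
Proof. by case: Hmo => [_ [h _]]; apply: h. Qed.
Lemma mo_0 m : mo 0%MM m.
Proof. by case: Hmo => [_ [_ h]]. Qed.

Lemma foldr_max (s : seq 'X_{1..n}) :
  let r := foldr (fun m acc => if mo acc m then m else acc) 0%MM s in
  (forall x, x \in s -> mo x r) /\ (s != [::] -> r \in s).
Proof.
elim: s => [|y s [IH1 IH2]] //= ; set r := foldr _ _ s.
case: ifP => hry; split.
- move=> x; rewrite inE => /orP [/eqP ->|hx]; first exact: mo_refl.
  exact: mo_trans (IH1 _ hx) hry.
- by rewrite inE eqxx.
- move=> x; rewrite inE => /orP [/eqP ->|hx]; last exact: IH1.
  by have := mo_total r y; rewrite hry.
- move=> _; case: s IH1 IH2 @r hry => [|z s] IH1 IH2 r hry.
    by rewrite /r /= mo_0 in hry.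
  by rewrite inE IH2 ?orbT.
Qed.

Lemma lm_max (f : S) m : f@_m != 0 -> mo m (lm mo f).
Proof. by rewrite -mcoeff_msupp => h; apply: (proj1 (foldr_max _)). Qed.

Lemma lm_supp (f : S) : f != 0 -> f@_(lm mo f) != 0.
Proof.
move=> hf; rewrite -mcoeff_msupp; apply: (proj2 (foldr_max _)).
apply/negP=> /eqP h; apply/negP: hf; rewrite negbK; apply/eqP/mpolyP => m.
by rewrite mcoeff0; apply/memN_msupp_eq0; rewrite h.
Qed.

Lemma lc_neq0 (f : S) : f != 0 -> lc mo f != 0.
Proof. exact: lm_supp. Qed.

Lemma lm_char (f : S) m : f@_m != 0 -> (forall m', f@_m' != 0 -> mo m' m) -> lm mo f = m.
Proof.
move=> h1 h2; have hf : f != 0 by apply/negP=> /eqP e; rewrite e mcoeff0 eqxx in h1.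
apply: mo_anti; [exact: h2 (lm_supp hf) | exact: lm_max].
Qed.

End LM.
From HB Require Import structures.
From mathcomp Require Import all_boot all_order all_algebra.
From mathcomp Require Import mpoly.
Set Implicit Arguments. Unset Strict Implicit. Unset Printing Implicit Defensive.
Import GRing.Theory.
Local Open Scope ring_scope.

Section Ideals.
Variables (n : nat) (K : fieldType).
Local Notation S := {mpoly K[n]}.

Lemma gen_ideal_is_ideal (A : S -> Prop) : is_ideal (gen_ideal A).
Proof.
split.
- by exists [::]; split=> //; rewrite big_nil.
- move=> a b [s1 [h1 ->]] [s2 [h2 ->]]; exists (s1 ++ s2); split.
    by move=> p; rewrite mem_cat => /orP [hp|hp]; [apply: h1|apply: h2].
  by rewrite big_cat.
- move=> r a [s [h ->]]; exists [seq (r * p.1, p.2) | p <- s]; split.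
    by move=> p /mapP [q hq ->] /=; apply: h.
  by rewrite big_map mulr_sumr; apply: eq_bigr => p _; rewrite mulrA.
Qed.

Lemma gen_ideal_min (A I : S -> Prop) : is_ideal I -> (forall a, A a -> I a) ->
  forall f, gen_ideal A f -> I f.
Proof.
move=> [h0 hD hM] hA f [s [hs ->]]; elim: s hs => [|p s IH] hs.
  by rewrite big_nil.
rewrite big_cons; apply: hD; first by apply: hM; apply: hA; apply: hs; rewrite inE eqxx.
by apply: IH => q hq; apply: hs; rewrite inE hq orbT.
Qed.

Lemma gen_ideal_sub (A : S -> Prop) a : A a -> gen_ideal A a.
Proof.
move=> ha; exists [:: (1, a)]; split; last by rewrite big_seq1 mul1r.
by move=> p; rewrite inE => /eqP ->.
Qed.

Lemma ideal_sum_is_ideal (I J : S -> Prop) : is_ideal I -> is_ideal J -> is_ideal (ideal_sum I J).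
Proof.
move=> [i0 iD iM] [j0 jD jM]; split.
- by exists 0, 0; split; rewrite ?addr0.
- move=> _ _ [a1 [b1 [h1 h2 ->]]] [a2 [b2 [h3 h4 ->]]].
  exists (a1 + a2), (b1 + b2); split; [exact: iD|exact: jD|].
  by rewrite addrACA.
- move=> r _ [a [b [h1 h2 ->]]]; exists (r * a), (r * b); split; [exact: iM|exact: jM|].
  by rewrite mulrDr.
Qed.

Lemma ideal_sum_l (I J : S -> Prop) a : is_ideal J -> I a -> ideal_sum I J a.
Proof. by move=> [j0 _ _] ha; exists a, 0; split; rewrite ?addr0. Qed.

Lemma ideal_sum_r (I J : S -> Prop) a : is_ideal I -> J a -> ideal_sum I J a.
Proof. by move=> [i0 _ _] ha; exists 0, a; split; rewrite ?add0r. Qed.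

Lemma ideal_scale (I : S -> Prop) c a : is_ideal I -> I a -> I (c *: a).
Proof. by move=> [_ _ hM] ha; rewrite -mul_mpolyC; apply: hM. Qed.

Lemma ideal_opp (I : S -> Prop) a : is_ideal I -> I a -> I (- a).
Proof. by move=> hI ha; rewrite -scaleN1r; apply: ideal_scale. Qed.

End Ideals.
From HB Require Import structures.
From mathcomp Require Import all_boot all_order all_algebra.
From mathcomp Require Import mpoly.
Set Implicit Arguments. Unset Strict Implicit. Unset Printing Implicit Defensive.
Import GRing.Theory.
Local Open Scope ring_scope.

Section Poly.
Variables (n : nat) (K : fieldType) (mo : rel 'X_{1..n}).
Hypothesis Hmo : monomial_order mo.
Local Notation S := {mpoly K[n]}.

Definition bnd (p : S) m := forall m', p@_m' != 0 -> mo m' m.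

Lemma bnd_lm (p : S) : bnd p (lm mo p).
Proof. by move=> m' h; apply: lm_max. Qed.

Lemma bnd_add p q m : bnd p m -> bnd q m -> bnd (p + q) m.
Proof.
move=> hp hq m'; rewrite mcoeffD.
case: (boolP (p@_m' == 0)) => [/eqP ->|h]; last by move=> _; apply: hp.
by rewrite add0r; apply: hq.
Qed.

Lemma bnd_scale c p m : bnd p m -> bnd (c *: p) m.
Proof.
move=> hp m'; rewrite mcoeffZ; case: (boolP (p@_m' == 0)) => [/eqP ->|h].
  by rewrite mulr0 eqxx.
by move=> _; apply: hp.
Qed.

Lemma bnd_opp p m : bnd p m -> bnd (- p) m.
Proof. by move=> hp; rewrite -scaleN1r; apply: bnd_scale. Qed.

Lemma mcoeffMX_supp (f : S) u m' : ('X_[u] * f)@_m' != 0 ->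
  exists2 m'', m' = (u + m'')%MM & f@_m'' != 0.
Proof.
rewrite mulrC -mcoeff_msupp (perm_mem (msuppMX f u)) => /mapP [m'' h ->].
by exists m''; rewrite // -mcoeff_msupp.
Qed.

Lemma monomial_mem (G : seq S) l :
  gen_ideal (fun h : S => exists2 g, g \in G & h = 'X_[lm mo g]) ('X_[l] : S) ->
  exists2 g, g \in G & (lm mo g <= l)%MM.
Proof.
move=> [s [hs he]].
case: (boolP (has (fun g => lm mo g <= l)%MM G)) => [/hasP [g hg h]|hn].
  by exists g.
exfalso; have := congr1 (mcoeff l) he; rewrite mcoeffX eqxx raddf_sum /=.
rewrite big1_seq; first by move/eqP; rewrite oner_eq0.
move=> p hp.
have [g hg ->] := hs p hp; apply/eqP; rewrite mcoeff_eq0.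
rewrite (perm_mem (msuppMX _ _)); apply/negP => /mapP [m'' _ hl].
move/negP: hn; apply; apply/hasP; exists g => //; rewrite hl; exact: lem_addr.
Qed.

Lemma oner_neq0' : (1 : K) != 0. Proof. exact: oner_neq0. Qed.

Lemma subm_id (l : 'X_{1..n}) : (l - l)%MM = 0%MM.
Proof. by apply/mnmP => i; rewrite mnmBE mnm0E subnn. Qed.

Lemma spoly_div (f b : S) : (lm mo f <= lm mo b)%MM ->
  spoly mo f b = (lc mo f)^-1 *: ('X_[(lm mo b - lm mo f)%MM] * f) - (lc mo b)^-1 *: b.
Proof.
move=> hd; rewrite /spoly mlcmE addmC submK // subm_id mpolyX0 mul1r.
by [].
Qed.

End Poly.
From HB Require Import structures.
From mathcomp Require Import all_boot all_order all_algebra.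
From mathcomp Require Import mpoly.
Set Implicit Arguments. Unset Strict Implicit. Unset Printing Implicit Defensive.
Import GRing.Theory.
Local Open Scope ring_scope.

Section Main.
Variables (n : nat) (K : fieldType) (mo : rel 'X_{1..n}).
Hypothesis Hmo : monomial_order mo.
Local Notation S := {mpoly K[n]}.
Variables (J E : S -> Prop) (GJ : seq S).
Hypotheses (HJ : is_ideal J) (HE : is_ideal E) (HG : groebner_basis mo J GJ)
  (HS : S_nice mo GJ E).

Definition Good (h : S) :=
  (exists a, [/\ J a, a != 0 & lm mo a = lm mo h]) \/
  (exists b, [/\ E b, b != 0 & lm mo b = lm mo h]).

Lemma bound2 (p q : S) l : (p != 0) || (q != 0) ->
  (forall m', p@_m' != 0 -> mlt mo m' l) -> (forall m', q@_m' != 0 -> mlt mo m' l) ->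
  exists m', [/\ mlt mo m' l, bnd mo p m' & bnd mo q m'].
Proof.
move=> hpq hp hq.
have key : forall r, (r = p \/ r = q) -> r != 0 -> bnd mo p (lm mo r) -> bnd mo q (lm mo r) ->
    exists m', [/\ mlt mo m' l, bnd mo p m' & bnd mo q m'].
  move=> r hr hr0 h1 h2; exists (lm mo r); split=> //.
  case: hr => er; subst r; [apply: hp|apply: hq]; exact: lm_supp.
case: (boolP (p == 0)) => [/eqP p0|pn0].
  apply: (key q) => //; first by right.
  - by move: hpq; rewrite p0 eqxx.
  - by move=> m'; rewrite p0 mcoeff0 eqxx.
  - exact: bnd_lm.
case: (boolP (q == 0)) => [/eqP q0|qn0].
  apply: (key p) => //; first by left.
  - exact: bnd_lm.
  - by move=> m'; rewrite q0 mcoeff0 eqxx.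
case/orP: (mo_total Hmo (lm mo p) (lm mo q)) => hlm.
  apply: (key q) => //; first by right.
  - move=> m' h; apply: (mo_trans Hmo _ hlm); exact: (lm_max Hmo h).
  - exact: bnd_lm.
apply: (key p) => //; first by left.
  - exact: bnd_lm.
  - move=> m' h; apply: (mo_trans Hmo _ hlm); exact: (lm_max Hmo h).
Qed.


Lemma strict_of (p : S) m : bnd mo p m -> p@_m = 0 -> forall m', p@_m' != 0 -> mlt mo m' m.
Proof.
move=> hb h0 m' hm; rewrite /mlt hb //=; apply/negP => /eqP e; subst m'.
by rewrite h0 eqxx in hm.
Qed.

Lemma main_ind (h : S) : h != 0 -> forall m a b, J a -> E b -> a + b = h ->
  bnd mo a m -> bnd mo b m -> Good h.
Proof.
move=> hn0 m; elim/(well_founded_induction (mlt_wf Hmo)): m => m IH a b ha hb hab ba bb.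
have hbh : bnd mo h m by rewrite -hab; apply: bnd_add.
have ab0 : (a != 0) || (b != 0).
  rewrite -negb_and; apply/negP => /andP [/eqP a0 /eqP b0].
  by move/negP: hn0; apply; rewrite -hab a0 b0 addr0.
have hcoef : h@_m = a@_m + b@_m by rewrite -hab mcoeffD.
case: (boolP (h@_m == 0)) => [/eqP hm0|hm0].
- case: (boolP (a@_m == 0)) => [/eqP am0|am0].
  + have bm0 : b@_m = 0 by move: hcoef; rewrite hm0 am0 add0r.
    have [m' [hm' b1 b2]] := bound2 ab0 (strict_of ba am0) (strict_of bb bm0).
    exact: (IH m' hm' a b).
  + have bm0 : b@_m = - a@_m by apply/eqP; rewrite -addr_eq0 addrC -hcoef hm0.
    have bmn0 : b@_m != 0 by rewrite bm0 oppr_eq0.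
    have lma : lm mo a = m by apply: lm_char.
    have lmb : lm mo b = m by apply: lm_char.
    have an0 : a != 0 by apply/negP => /eqP e; rewrite e mcoeff0 eqxx in am0.
    have bn0 : b != 0 by apply/negP => /eqP e; rewrite e mcoeff0 eqxx in bmn0.
    have inJ : init_ideal mo J ('X_[m] : S).
      by apply: gen_ideal_sub; exists a; split => //; rewrite lma.
    have [f hf hdiv] := monomial_mem (proj1 (proj2 HG _) inJ).
    have [fJ fn0] := proj1 HG f hf.
    rewrite -lmb in hdiv.
    have hsp := HS hf hb bn0.
    rewrite spoly_div // in hsp.
    set u := (lm mo b - lm mo f)%MM in hsp.
    pose t := (lc mo b / lc mo f) *: ('X_[u] * f).
    have tJ : J t by apply: ideal_scale => //; case: HJ => _ _ hM; apply: hM.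
    have eE : E (b - t).
      have -> : b - t = - lc mo b *: spoly mo f b.
        rewrite spoly_div // -/u scalerBr !scalerA !mulNr divff; last exact: lc_neq0.
        by rewrite !scaleNr scale1r opprK addrC /t.
      by apply: ideal_scale => //; rewrite spoly_div.
    have hum : (u + lm mo f)%MM = m by rewrite submK // lmb.
    have bt : bnd mo t m.
      apply: bnd_scale => m' /mcoeffMX_supp [m'' -> hm''].
      rewrite -hum addmC [(u + lm mo f)%MM]addmC; apply: mo_addr => //.
      exact: lm_max.
    have tm : t@_m = b@_m.
      rewrite /t mcoeffZ -hum [('X_[u] * f)]mulrC mcoeffMX.
      rewrite -[f@_(lm mo f)]/(lc mo f) divfK; last exact: lc_neq0.
      by rewrite hum /lc lmb.
    have hab' : (a + t) + (b - t) = h by rewrite addrA addrAC addrK.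
    have ab0' : (a + t != 0) || (b - t != 0).
      rewrite -negb_and; apply/negP => /andP [/eqP a0 /eqP b0].
      by move/negP: hn0; apply; rewrite -hab' a0 b0 addr0.
    have s1 : forall m', (a + t)@_m' != 0 -> mlt mo m' m.
      apply: strict_of; first by apply: bnd_add.
      by rewrite mcoeffD tm -hcoef.
    have s2 : forall m', (b - t)@_m' != 0 -> mlt mo m' m.
      apply: strict_of; first by apply: bnd_add => //; apply: bnd_opp.
      by rewrite mcoeffB tm subrr.
    have [m' [hm' b1 b2]] := bound2 ab0' s1 s2.
    apply: (IH m' hm' (a + t) (b - t)) => //.
    by case: HJ => _ hD _; apply: hD.
- have lmh : lm mo h = m by apply: lm_char.
  case: (boolP (a@_m == 0)) => [/eqP am0|am0].
  + have bmn0 : b@_m != 0 by move: hm0; rewrite hcoef am0 add0r.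
    right; exists b; split => //.
      by apply/negP => /eqP e; rewrite e mcoeff0 eqxx in bmn0.
    by rewrite lmh; apply: lm_char.
  + left; exists a; split => //.
      by apply/negP => /eqP e; rewrite e mcoeff0 eqxx in am0.
    by rewrite lmh; apply: lm_char.
Qed.

End Main.
From HB Require Import structures.
From mathcomp Require Import all_boot all_order all_algebra.
From mathcomp Require Import mpoly.
Set Implicit Arguments. Unset Strict Implicit. Unset Printing Implicit Defensive.
Import GRing.Theory.
Local Open Scope ring_scope.

Theorem mainTheorem14 (n : nat) (K : fieldType) (mo : rel 'X_{1..n})
    (J E : {mpoly K[n]} -> Prop) (GJ : seq {mpoly K[n]}) :
  monomial_order mo ->
  is_ideal J -> is_ideal E ->
  groebner_basis mo J GJ ->
  S_nice mo GJ E ->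
  G_nice mo J E /\
  (forall GE : seq {mpoly K[n]},
     groebner_basis mo E GE -> groebner_basis mo (ideal_sum J E) (GE ++ GJ)).
Proof.
move=> Hmo HJ HE HG HS.
have HJE := ideal_sum_is_ideal HJ HE.
have Hin : forall I : {mpoly K[n]} -> Prop, is_ideal (init_ideal mo I) by move=> I; apply: gen_ideal_is_ideal.
have HsumI := ideal_sum_is_ideal (Hin J) (Hin E).
have GN : G_nice mo J E.
  move=> f; split.
  - apply: gen_ideal_min => // _ [h [hJE hn0 ->]].
    case: hJE => a [b [ha hb hab]].
    pose m := if mo (lm mo a) (lm mo b) then lm mo b else lm mo a.
    have ba : bnd mo a m.
      rewrite /m; case: ifP => hl m' hm; last exact: lm_max.
      exact: (mo_trans Hmo (lm_max Hmo hm) hl).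
    have bb : bnd mo b m.
      rewrite /m; case: ifP => hl m' hm; first exact: lm_max.
      apply: (mo_trans Hmo (lm_max Hmo hm)).
      by have := mo_total Hmo (lm mo a) (lm mo b); rewrite hl.
    have [[a' [h1 h2 h3]]|[b' [h1 h2 h3]]] :=
      main_ind Hmo HJ HE HG HS hn0 ha hb (esym hab) ba bb.
    + apply: ideal_sum_l => //; apply: gen_ideal_sub; exists a'; split => //.
      by rewrite h3.
    + apply: ideal_sum_r => //; apply: gen_ideal_sub; exists b'; split => //.
      by rewrite h3.
  - move=> [x [y [hx hy ->]]]; case: (Hin (ideal_sum J E)) => _ hD _; apply: hD.
    + apply: (gen_ideal_min (Hin _)) hx => _ [g [hg hn0 ->]].
      apply: gen_ideal_sub; exists g; split => //; exact: ideal_sum_l.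
    + apply: (gen_ideal_min (Hin _)) hy => _ [g [hg hn0 ->]].
      apply: gen_ideal_sub; exists g; split => //; exact: ideal_sum_r.
split => // GE [HGE1 HGE2]; split.
  move=> g; rewrite mem_cat => /orP [hg|hg].
  - by have [h1 h2] := HGE1 g hg; split => //; apply: ideal_sum_r.
  - by have [h1 h2] := proj1 HG g hg; split => //; apply: ideal_sum_l.
have Hgen := gen_ideal_is_ideal
  (fun h : {mpoly K[n]} => exists2 g, g \in GE ++ GJ & h = 'X_[lm mo g]).
move=> f; split.
- move/GN => [x [y [hx hy ->]]]; case: Hgen => _ hD _; apply: hD.
  + apply: (gen_ideal_min (gen_ideal_is_ideal _)) (proj1 (proj2 HG x) hx).
    move=> _ [g hg ->]; apply: gen_ideal_sub; exists g => //.
    by rewrite mem_cat hg orbT.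
  + apply: (gen_ideal_min (gen_ideal_is_ideal _)) (proj1 (HGE2 y) hy).
    move=> _ [g hg ->]; apply: gen_ideal_sub; exists g => //.
    by rewrite mem_cat hg.
- apply: gen_ideal_min => // _ [g hg ->]; apply: gen_ideal_sub; exists g; split => //.
  + move: hg; rewrite mem_cat => /orP [hg|hg].
    * exact: ideal_sum_r (proj1 (HGE1 g hg)).
    * exact: ideal_sum_l (proj1 (proj1 HG g hg)).
  + move: hg; rewrite mem_cat => /orP [hg|hg].
    * exact: (proj2 (HGE1 g hg)).
    * exact: (proj2 (proj1 HG g hg)).
Qed.
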